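(* Let $h\ge2$, $L\in\mathbb{N}$, $\beta>0$, $\lambda\ge0$, $f,g:\mathbb{Z}^2\to\mathbb{R}$, let $\mathcal W:(\mathbb{Z}^2)^h\to(0,\infty)$ be any weight and $p,q\in(1,\infty)$ with $\frac1p+\frac1q=1$. Then for every $r\in\mathbb{N}$, $$\Xi(r)\le\Big(\max_{I\ne*}\big\|\widehat{\mathsf q}^{|f|,I}_L\tfrac1{\mathcal W}\big\|_{\ell^p}\Big)\Big(\max_{J\ne*}\big\|\mathcal W\,\overline{\mathsf q}^{|g|,J}_L\big\|_{\ell^q}\Big)\,\Xi^{\mathrm{bulk}}(r),$$ where $$\Xi^{\mathrm{bulk}}(r):=\sum_{\substack{I_1,\dots,I_r\vdash\{1,\dots,h\}\ \text{full support},\\ I_i\ne I_{i-1},\ I_i\ne*}}\Big\{\prod_{i=1}^r|\mathbb{E}[\xi^{I_i}_\beta]|\Big\}\Big(\max_{I,J\ne*,\,I\ne J}\big\|\mathcal W\widehat{\mathsf Q}^{I,J}_L\tfrac1{\mathcal W}\big\|_{\ell^q\to\ell^q}\Big)^{r-1}\Big(\max_{I\ne*}\big\|\mathcal W|\widehat{\mathsf U}|^I_{L,\lambda,\beta}\tfrac1{\mathcal W}\big\|_{\ell^q\to\ell^q}\Big)^r.$$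
   Context: Same setting as follows. $S$ simple random walk on $\mathbb{Z}^2$, $q_n(x):=\mathrm{P}(S_n=x\mid S_0=0)$, $q^f_n(x):=\sum_zq_n(x-z)f(z)$. $\omega$ i.i.d. independent of $S$ with mean $0$, variance $1$, $\lambda(\beta):=\log\mathbb{E}e^{\beta\omega}<\infty$; $\xi_\beta:=e^{\beta\omega-\lambda(\beta)}-1$. Partitions $I\vdash\{1,\dots,h\}$, $*$ = all singletons; $\mathbf x\sim I$: $x^a=x^b$ for $a,b$ in a common block, $x^a\ne x^b$ for $a,b$ in distinct blocks of size $\ge2$; full support: each $a$ lies in a block of size $\ge2$ of some $I_i$; $\mathbb{E}[\xi^J_\beta]:=\prod_{i:|J^i|\ge2}\mathbb{E}[\xi^{|J^i|}_\beta]$ for $J\ne*$. $\mathsf Q^{I,J}_n(\mathbf z,\mathbf x):=\mathbf 1_{\{\mathbf z\sim I,\mathbf x\sim J\}}\prod_iq_n(x^i-z^i)$, $\mathsf q^{f,J}_n(\mathbf x):=\mathbf 1_{\{\mathbf x\sim J\}}\prod_iq^f_n(x^i)$, $\widehat{\mathsf Q}^{I,J}_L:=\sum_{n=1}^L\mathsf Q^{I,J}_n$, $\widehat{\mathsf q}^{f,I}_L:=\sum_{n=1}^L\mathsf q^{f,I}_n$, $\overline{\mathsf q}^{g,J}_L(\mathbf z):=\max_{1\le n\le L}\mathsf q^{g,J}_n(\mathbf z)$; $|\mathsf U|^J_{m,\beta}(\mathbf z,\mathbf x):=\sum_{k\ge1}|\mathbb{E}\xi^J_\beta|^k\sum_{0=n_0<\dots<n_k=m}\sum_{\mathbf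 y_1..\mathbf y_{k-1}}\prod_{i}\mathsf Q^{J,J}_{n_i-n_{i-1}}(\mathbf y_{i-1},\mathbf y_i)$ ($\mathbf y_0=\mathbf z$, $\mathbf y_k=\mathbf x$), $|\widehat{\mathsf U}|^J_{L,\lambda,\beta}(\mathbf z,\mathbf x):=\mathbf 1_{\{\mathbf z=\mathbf x\sim J\}}+\sum_{m=1}^Le^{-\lambda m}|\mathsf U|^J_{m,\beta}(\mathbf z,\mathbf x)$. $\Xi(r):=\sum_{I_1..I_r\ \text{full support},\ I_i\ne I_{i-1},I_i\ne*}\{\prod_i|\mathbb{E}\xi^{I_i}_\beta|\}\sum_{\mathbf z_i,\mathbf z_i'}\widehat{\mathsf q}^{|f|,I_1}_L(\mathbf z_1)|\widehat{\mathsf U}|^{I_1}_{L,\lambda,\beta}(\mathbf z_1,\mathbf z_1')\prod_{i=2}^r\widehat{\mathsf Q}^{I_{i-1},I_i}_L(\mathbf z'_{i-1},\mathbf z_i)|\widehat{\mathsf U}|^{I_i}_{L,\lambda,\beta}(\mathbf z_i,\mathbf z_i')\,\overline{\mathsf q}^{|g|,I_r}_L(\mathbf z_r')$. Norms: $\|F\|_{\ell^p}:=(\sum|F|^p)^{1/p}$ on $(\mathbb{Z}^2)^h$; a kernel $\mathsf A(\mathbf z,\mathbf x)$ acts by $(\mathsf Ag)(\mathbf z)=\sum_{\mathbf x}\mathsf A(\mathbf z,\mathbf x)g(\mathbf x)$, $\|\mathsf A\|_{\ell^q\to\ell^q}$ is its operator norm; $(\mathcal W\mathsf A\tfrac1{\mathcal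 W})(\mathbf z,\mathbf x):=\mathcal W(\mathbf z)\mathsf A(\mathbf z,\mathbf x)/\mathcal W(\mathbf x)$, and $\widehat{\mathsf q}\tfrac1{\mathcal W}$, $\mathcal W\overline{\mathsf q}$ are pointwise products. *)

(* Defs.v *)
From HB Require Import structures.
From mathcomp Require Import all_boot all_order all_algebra.
From mathcomp Require Import all_classical all_reals all_analysis.
Set Implicit Arguments.
Unset Strict Implicit.
Unset Printing Implicit Defensive.
Import Order.TTheory GRing.Theory Num.Theory.
Local Open Scope ring_scope.

Definition Z2 := (int * int)%type.
Definition sub2 (x z : Z2) : Z2 := (x.1 - z.1, x.2 - z.2).
Definition Xh (h : nat) := {ffun 'I_h -> Z2}.
Definition Xh0 (h : nat) : Xh h := [ffun => (0, 0)].

Definition step (e : 'I_4) : Z2 :=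
  match val e with
  | 0 => (1, 0) | 1 => (-1, 0) | 2 => (0, 1) | _ => (0, -1)
  end.

(* q_n(x) = P(S_n = x | S_0 = 0): S_n is the sum of n i.i.d. uniform steps *)
Definition qrw (R : realType) (n : nat) (x : Z2) : R :=
  (#|[set s : {ffun 'I_n -> 'I_4} |
       (\sum_(i < n) (step (s i)).1, \sum_(i < n) (step (s i)).2) == x]|)%:R
  / (4%:R ^+ n).

Definition qf (R : realType) (f : Z2 -> R) (n : nat) (x : Z2) : \bar R :=
  \esum_(z in [set: Z2]) (qrw R n (sub2 x z) * `|f z|)%:E.

Definition is_part (h : nat) (I : {set {set 'I_h}}) : bool :=
  finset.partition I [set: 'I_h].
Definition star (h : nat) : {set {set 'I_h}} := [set [set a] | a : 'I_h].

Definition sim (h : nat) (x : Xh h) (I : {set {set 'I_h}}) : bool :=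
  [forall B in I, forall a in B, forall b in B, x a == x b] &&
  [forall B in I, forall C in I,
     ((B != C) && (1 < #|B|)%N && (1 < #|C|)%N) ==>
     [forall a in B, forall b in C, x a != x b]].

Definition qJ (R : realType) (h : nat) (f : Z2 -> R) (J : {set {set 'I_h}})
  (n : nat) (x : Xh h) : \bar R :=
  if sim x J then (\prod_(a < h) qf f n (x a))%E else 0%E.

Definition QQ (R : realType) (h : nat) (I J : {set {set 'I_h}}) (n : nat)
  (z x : Xh h) : \bar R :=
  if sim z I && sim x J then (\prod_(a < h) qrw R n (sub2 (x a) (z a)))%:E
  else 0%E.

Definition Qhat (R : realType) (h : nat) (I J : {set {set 'I_h}}) (L : nat)
  (z x : Xh h) : \bar R :=
  (\sum_(1 <= n < L.+1) QQ R I J n z x)%E.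

Definition qhat (R : realType) (h : nat) (f : Z2 -> R) (I : {set {set 'I_h}})
  (L : nat) (x : Xh h) : \bar R :=
  (\sum_(1 <= n < L.+1) qJ f I n x)%E.

Definition qbar (R : realType) (h : nat) (g : Z2 -> R) (J : {set {set 'I_h}})
  (L : nat) (x : Xh h) : \bar R :=
  \big[maxe/0%E]_(1 <= n < L.+1) qJ g J n x.

(* disorder: law P of omega; lambda(beta) = log E e^{beta omega};
   E[xi_beta^k] with xi_beta = e^{beta omega - lambda(beta)} - 1 *)
Definition lambda (R : realType) (P : probability R R) (beta : R) : R :=
  ln (fine (\int[P]_x (expR (beta * x))%:E)%E).

Definition xi_mom (R : realType) (P : probability R R) (beta : R) (k : nat)
  : \bar R :=
  (\int[P]_x ((expR (beta * x - lambda P beta) - 1) ^+ k)%:E)%E.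

Definition Exi (R : realType) (P : probability R R) (beta : R) (h : nat)
  (J : {set {set 'I_h}}) : \bar R :=
  `| \prod_(B in J | (1 < #|B|)%N) xi_mom P beta #|B| |%E.

Definition nv (m k : nat) (t : k.+1.-tuple 'I_m.+1) (j : nat) : nat :=
  val (nth ord0 t j).
Definition chain (m k : nat) (t : k.+1.-tuple 'I_m.+1) : bool :=
  [&& nv t 0 == 0%N, nv t k == m & [forall i : 'I_k, (nv t i < nv t i.+1)%N]].

(* |U|^J_{m,beta}(z, x), with c = |E xi^J_beta| *)
Definition Uabs (R : realType) (h : nat) (c : \bar R) (J : {set {set 'I_h}})
  (m : nat) (z x : Xh h) : \bar R :=
  (\esum_(k in [set k : nat | (1 <= k)%N])
     c ^+ k *
     \sum_(t : k.+1.-tuple 'I_m.+1 | chain t)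
       \esum_(y in [set y : k.+1.-tuple (Xh h) |
                      nth (Xh0 h) y 0 = z /\ nth (Xh0 h) y k = x])
         \prod_(i < k) QQ R J J (nv t i.+1 - nv t i)
                          (nth (Xh0 h) y i) (nth (Xh0 h) y i.+1))%E.

Definition Uhat (R : realType) (h : nat) (c : \bar R) (lam : R)
  (J : {set {set 'I_h}}) (L : nat) (z x : Xh h) : \bar R :=
  ((if (z == x) && sim x J then 1 else 0) +
   \sum_(1 <= m < L.+1) (expR (- lam * m%:R))%:E * Uabs c J m z x)%E.

Definition lpnorm (R : realType) (T : choiceType) (p : R) (F : T -> \bar R)
  : \bar R :=
  ((\esum_(x in [set: T]) (`|F x| `^ p)) `^ p^-1)%E.

Definition kact (R : realType) (T : choiceType) (A : T -> T -> \bar R)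
  (g : T -> R) : T -> \bar R :=
  fun z => (\esum_(x in [set: T]) A z x * (g x)%:E)%E.

Definition opnorm (R : realType) (T : choiceType) (q : R)
  (A : T -> T -> \bar R) : \bar R :=
  ereal_sup [set lpnorm q (kact A g) | g in
     [set g : T -> R | (forall x, 0 <= g x) /\ (lpnorm q (fun x => (g x)%:E) <= 1)%E]].

Definition wconj (R : realType) (T : choiceType) (W : T -> R)
  (A : T -> T -> \bar R) : T -> T -> \bar R :=
  fun z x => ((W z)%:E * A z x * ((W x)^-1)%:E)%E.

(* admissible sequences I_1, ..., I_r (stored as I_0..I_{r-1}) *)
Definition Iseq (h r : nat) (Is : r.-tuple {set {set 'I_h}}) (i : nat) :=
  nth finset.set0 Is i.
Definition admissible (h r : nat) (Is : r.-tuple {set {set 'I_h}}) : bool :=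
  [&& [forall i : 'I_r, is_part (tnth Is i) && (tnth Is i != star h)],
      [forall i : 'I_r, (0 < i)%N ==> (Iseq Is i != Iseq Is i.-1)] &
      [forall a : 'I_h, [exists i : 'I_r, (1 < #|finset.pblock (tnth Is i) a|)%N]]].

Definition Xi (R : realType) (P : probability R R) (beta lam : R) (h : nat)
  (f g : Z2 -> R) (L r : nat) : \bar R :=
  (\sum_(Is : r.-tuple {set {set 'I_h}} | admissible Is)
    (\prod_(i < r) Exi P beta (tnth Is i)) *
    \esum_(zz in [set: r.-tuple (Xh h * Xh h)])
      (let I := Iseq Is in
       let z i := (nth (Xh0 h, Xh0 h) zz i).1 in
       let z' i := (nth (Xh0 h, Xh0 h) zz i).2 in
       let U J := Uhat (Exi P beta J) lam J L in
       qhat f (I 0%N) L (z 0%N) * U (I 0%N) (z 0%N) (z' 0%N) *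
       (\prod_(1 <= i < r)
          (Qhat R (I i.-1) (I i) L (z' i.-1) (z i) * U (I i) (z i) (z' i))) *
       qbar g (I r.-1) L (z' r.-1)))%E.

Definition Xibulk (R : realType) (P : probability R R) (beta lam : R)
  (h : nat) (W : Xh h -> R) (q : R) (L r : nat) : \bar R :=
  let maxQ := \big[maxe/0%E]_(IJ : {set {set 'I_h}} * {set {set 'I_h}} |
                   [&& is_part IJ.1, IJ.1 != star h, is_part IJ.2,
                       IJ.2 != star h & IJ.1 != IJ.2])
                 opnorm q (wconj W (Qhat R IJ.1 IJ.2 L)) in
  let maxU := \big[maxe/0%E]_(I : {set {set 'I_h}} | is_part I && (I != star h))
                 opnorm q (wconj W (Uhat (Exi P beta I) lam I L)) in
  (\sum_(Is : r.-tuple {set {set 'I_h}} | admissible Is)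
     (\prod_(i < r) Exi P beta (tnth Is i)) * maxQ ^+ r.-1 * maxU ^+ r)%E.

(* Main.v *)
Require Import Defs.
From HB Require Import structures.
From mathcomp Require Import all_boot all_order all_algebra.
From mathcomp Require Import all_classical all_reals all_analysis.
Import Order.TTheory GRing.Theory Num.Theory.
Local Open Scope ring_scope.

Set Implicit Arguments.
Unset Strict Implicit.
Unset Printing Implicit Defensive.

Section Helpers1.
Local Open Scope classical_set_scope.
Local Open Scope ring_scope.
Local Open Scope ereal_scope.


Section EsumExtra.
Context {R : realType} {T : choiceType}.
Implicit Types (a b : T -> \bar R) (S : set T).

Lemma esum_ge1 S a i : S i -> (forall x, 0 <= a x) -> a i <= \esum_(x in S) a x.
Proof.
move=> Si a0; apply: esum_ge; exists [set i].
  by split; [exact: finite_set1| move=> y ->].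
by rewrite fsbig_set1.
Qed.

Lemma esumZl S c a : 0 <= c -> (forall x, 0 <= a x) ->
  \esum_(i in S) (c * a i) = c * \esum_(i in S) a i.
Proof.
move=> c0 a0.
have E : [set \sum_(x \in A) (c * a x) | A in fsets S] =
         [set c * y | y in [set \sum_(x \in A) a x | A in fsets S]].
  apply/seteqP; split => y /=.
    by move=> [A FA <-]; exists (\sum_(x \in A) a x); [exists A|rewrite ge0_mule_fsumr].
  by move=> [_ [A FA <-] <-]; exists A => //; rewrite ge0_mule_fsumr.
case: c c0 E => [r| |//] c0 E.
  rewrite /esum E; rewrite ereal_supZl //.
    by apply/set0P; exists (\sum_(x \in set0) a x); exists set0 => //; exact: fsets_set0.
have [e0|] := eqVneq (\esum_(i in S) a i) 0.
  have ai0 i : S i -> a i = 0.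
    by move=> Si; apply/le_anti; rewrite a0 andbT -e0 esum_ge1.
  rewrite e0 mule0; apply: esum1 => i Si; by rewrite ai0 // mule0.
move=> en0.
have egt : 0 < \esum_(i in S) a i by rewrite lt0e en0 esum_ge0.
move: (egt) => /ereal_sup_gt [_ [A [finA AS] <-]] /fsume_gt0 [i Ai ai0].
rewrite gt0_mulye //; apply/eqP; rewrite eq_le leey /=.
apply: le_trans (esum_ge1 (AS _ Ai) _); last by move=> x; rewrite mule_ge0.
by rewrite gt0_mulye.
Qed.

Lemma esumZr S c a : 0 <= c -> (forall x, 0 <= a x) ->
  \esum_(i in S) (a i * c) = (\esum_(i in S) a i) * c.
Proof.
move=> c0 a0; rewrite muleC -esumZl //; apply: eq_esum => i _; exact: muleC.
Qed.

End EsumExtra.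

End Helpers1.

Section Helpers2.
Local Open Scope classical_set_scope.
Local Open Scope ring_scope.
Local Open Scope ereal_scope.


Section Norms.
Context {R : realType} {T : choiceType}.
Implicit Types (F G : T -> \bar R).

Lemma lpnorm_ge0 (q : R) F : 0 <= lpnorm q F.
Proof. exact: poweR_ge0. Qed.

Lemma poweRK (x : \bar R) (q : R) : (0 < q)%R -> 0 <= x -> (x `^ q) `^ q^-1 = x.
Proof.
by move=> q0 x0; rewrite -poweRrM mulfV ?gt_eqF // poweRe1.
Qed.

Lemma poweRKV (x : \bar R) (q : R) : (0 < q)%R -> 0 <= x -> (x `^ q^-1) `^ q = x.
Proof.
by move=> q0 x0; rewrite -poweRrM mulVf ?gt_eqF // poweRe1.
Qed.

Lemma poweR_le (x y : \bar R) (q : R) : (0 <= q)%R -> 0 <= x -> x <= y -> x `^ q <= y `^ q.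
Proof.
move=> q0 x0 xy; apply: gt0_ler_poweR => //; rewrite in_itv /= ?x0 ?leey //.
by rewrite (le_trans x0 xy).
Qed.

Lemma lpnorm_ge1 (q : R) F z : (0 < q)%R -> (forall x, 0 <= F x) -> F z <= lpnorm q F.
Proof.
move=> q0 F0; rewrite /lpnorm.
rewrite -[F z](@poweRK _ q) //; apply: poweR_le; first by rewrite invr_ge0 ltW.
  exact: poweR_ge0.
rewrite -(gee0_abs (F0 z)); apply: (esum_ge1 (a := fun x => `|F x| `^ q)) => //.
move=> x; exact: poweR_ge0.
Qed.

Lemma lpnorm_eq0 (q : R) F z : (0 < q)%R -> (forall x, 0 <= F x) -> lpnorm q F = 0 -> F z = 0.
Proof.
move=> q0 F0 e; apply/le_anti; rewrite F0 andbT -e; exact: lpnorm_ge1.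
Qed.

Lemma lpnormZ (q : R) c F : (0 < q)%R -> 0 <= c -> (forall x, 0 <= F x) ->
  lpnorm q (fun x => c * F x) = c * lpnorm q F.
Proof.
move=> q0 c0 F0; rewrite /lpnorm.
under eq_esum do rewrite abseM (gee0_abs c0) poweRM ?abse_ge0 //.
rewrite esumZl; [|exact: poweR_ge0|by move=> x; exact: poweR_ge0].
rewrite poweRM ?poweR_ge0 //. rewrite (poweRK q0 c0) //.
by apply: esum_ge0 => x _; exact: poweR_ge0.
Qed.

Lemma lpnorm_le (q : R) F G : (0 < q)%R -> (forall x, 0 <= F x) ->
  (forall x, F x <= G x) -> lpnorm q F <= lpnorm q G.
Proof.
move=> q0 F0 FG; rewrite /lpnorm; apply: poweR_le; first by rewrite invr_ge0 ltW.
  by apply: esum_ge0 => x _; exact: poweR_ge0.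
apply: le_esum => x _; apply: poweR_le; first exact: ltW.
  exact: abse_ge0.
by rewrite !gee0_abs ?(le_trans (F0 x)).
Qed.

Lemma lpnorm0 (q : R) : (0 < q)%R -> lpnorm q (fun _ : T => 0) = 0.
Proof.
move=> q0; rewrite /lpnorm esum1 ?poweR0r // ?invr_neq0 ?gt_eqF //.
by move=> x _; rewrite abse0 poweR0r // gt_eqF.
Qed.

Lemma hoelder1 (p q : R) F G : (0 < p)%R -> (0 < q)%R -> (p^-1 + q^-1 = 1)%R ->
  (forall x, 0 <= F x) -> (forall x, 0 <= G x) ->
  lpnorm p F = 1 -> lpnorm q G = 1 ->
  \esum_(x in [set: T]) (F x * G x) <= 1.
Proof.
move=> p0 q0 pq F0 G0 nF nG.
have SF : \esum_(x in [set: T]) (`|F x| `^ p) = 1.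
  rewrite -[LHS](@poweRKV _ p) //; last by apply: esum_ge0 => x _; exact: poweR_ge0.
  by rewrite -/(lpnorm p F) nF poweR1r.
have SG : \esum_(x in [set: T]) (`|G x| `^ q) = 1.
  rewrite -[LHS](@poweRKV _ q) //; last by apply: esum_ge0 => x _; exact: poweR_ge0.
  by rewrite -/(lpnorm q G) nG poweR1r.
have Ffin x : F x \is a fin_num.
  rewrite ge0_fin_numE ?F0 //; apply: (le_lt_trans (lpnorm_ge1 x p0 F0)).
  by rewrite nF ltry.
have Gfin x : G x \is a fin_num.
  rewrite ge0_fin_numE ?G0 //; apply: (le_lt_trans (lpnorm_ge1 x q0 G0)).
  by rewrite nG ltry.
apply: (@le_trans _ _ (\esum_(x in [set: T]) ((`|F x| `^ p) * (p^-1)%:E +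
                                              (`|G x| `^ q) * (q^-1)%:E))).
  apply: le_esum => x _.
  rewrite -(fineK (Ffin x)) -(fineK (Gfin x)) /= -!EFinM -EFinD lee_fin.
  have f0 : (0 <= fine (F x))%R by rewrite fine_ge0.
  have g0 : (0 <= fine (G x))%R by rewrite fine_ge0.
  rewrite !ger0_norm //; exact: conjugate_powR.
rewrite esumD; first last.
- by move=> x _; rewrite mule_ge0 ?poweR_ge0 // lee_fin invr_ge0 ltW.
- by move=> x _; rewrite mule_ge0 ?poweR_ge0 // lee_fin invr_ge0 ltW.
have pi0 : 0 <= (p^-1)%:E by rewrite lee_fin invr_ge0 ltW.
have qi0 : 0 <= (q^-1)%:E by rewrite lee_fin invr_ge0 ltW.
rewrite !esumZr //; last 2 first.
- by move=> x; exact: poweR_ge0.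
- by move=> x; exact: poweR_ge0.
by rewrite SF SG !mul1e -EFinD pq.
Qed.

Lemma hoelder_esum (p q : R) F G : (0 < p)%R -> (0 < q)%R -> (p^-1 + q^-1 = 1)%R ->
  (forall x, 0 <= F x) -> (forall x, 0 <= G x) ->
  \esum_(x in [set: T]) (F x * G x) <= lpnorm p F * lpnorm q G.
Proof.
move=> p0 q0 pq F0 G0.
have [A0|] := eqVneq (lpnorm p F) 0.
  rewrite A0 mul0e esum1 // => x _; by rewrite (lpnorm_eq0 x p0 F0 A0) mul0e.
have [B0|] := eqVneq (lpnorm q G) 0.
  rewrite B0 mule0 esum1 // => x _; by rewrite (lpnorm_eq0 x q0 G0 B0) mule0.
move=> Bn0 An0.
have Agt : 0 < lpnorm p F by rewrite lt0e An0 lpnorm_ge0.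
have Bgt : 0 < lpnorm q G by rewrite lt0e Bn0 lpnorm_ge0.
have [Ay|] := eqVneq (lpnorm p F) +oo.
  by rewrite Ay gt0_mulye // leey.
have [By|] := eqVneq (lpnorm q G) +oo.
  by rewrite By gt0_muley // leey.
move=> Bny Any.
have Afin : lpnorm p F \is a fin_num by rewrite ge0_fin_numE ?lpnorm_ge0 // ltey.
have Bfin : lpnorm q G \is a fin_num by rewrite ge0_fin_numE ?lpnorm_ge0 // ltey.
set a := fine (lpnorm p F); set b := fine (lpnorm q G).
have Ae : lpnorm p F = a%:E by rewrite fineK.
have Be : lpnorm q G = b%:E by rewrite fineK.
have a0 : (0 < a)%R by rewrite -lte_fin -Ae.
have b0 : (0 < b)%R by rewrite -lte_fin -Be.
pose F' x := (a^-1)%:E * F x; pose G' x := (b^-1)%:E * G x.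
have F'0 x : 0 <= F' x by rewrite mule_ge0 // lee_fin invr_ge0 ltW.
have G'0 x : 0 <= G' x by rewrite mule_ge0 // lee_fin invr_ge0 ltW.
have nF' : lpnorm p F' = 1.
  rewrite lpnormZ // ?lee_fin ?invr_ge0 ?ltW // Ae -EFinM mulVf // gt_eqF //.
have nG' : lpnorm q G' = 1.
  rewrite lpnormZ // ?lee_fin ?invr_ge0 ?ltW // Be -EFinM mulVf // gt_eqF //.
have H := hoelder1 p0 q0 pq F'0 G'0 nF' nG'.
have E : \esum_(x in [set: T]) (F x * G x) =
         (a * b)%:E * \esum_(x in [set: T]) (F' x * G' x).
  rewrite -esumZl; last 2 first.
  - by rewrite lee_fin mulr_ge0 // ltW.
  - by move=> x; rewrite mule_ge0.
  apply: eq_esum => x _; rewrite /F' /G'.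
  rewrite muleACA muleA -!EFinM muleA muleA -EFinM mulrACA !mulfV ?gt_eqF // mulr1 mul1e //.
rewrite E Ae Be -EFinM; rewrite -[X in _ <= X]mule1; apply: lee_wpmul2l => //.
by rewrite lee_fin mulr_ge0 // ltW.
Qed.

End Norms.

End Helpers2.

Section Helpers3.
Local Open Scope classical_set_scope.
Local Open Scope ring_scope.
Local Open Scope ereal_scope.


Section Op.
Context {R : realType} {T : choiceType}.
Implicit Types (u : T -> \bar R) (A : T -> T -> \bar R).

Lemma opnorm_ge0 (q : R) A : (0 < q)%R -> 0 <= opnorm q A.
Proof.
move=> q0.
apply: le_trans (lpnorm_ge0 q (kact A (fun _ => 0%R))) _.
apply: ereal_sup_ubound; exists (fun _ => 0%R) => //; split => //.
by rewrite (_ : (fun _ => _) = (fun _ : T => 0)) ?lpnorm0.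
Qed.

Lemma kact_ge0 A (g : T -> R) z : (forall z x, 0 <= A z x) -> (forall x, (0 <= g x)%R) ->
  0 <= kact A g z.
Proof. by move=> A0 g0; apply: esum_ge0 => x _; rewrite mule_ge0 // lee_fin. Qed.

Lemma le_opnorm (q : R) A (g : T -> R) : (forall x, (0 <= g x)%R) ->
  lpnorm q (fun x => (g x)%:E) <= 1 -> lpnorm q (kact A g) <= opnorm q A.
Proof. by move=> g0 g1; apply: ereal_sup_ubound; exists g. Qed.

Lemma op_bound (q : R) A u : (0 < q)%R -> (forall z x, 0 <= A z x) -> (forall x, 0 <= u x) ->
  lpnorm q (fun z => \esum_(x in [set: T]) (A z x * u x)) <= opnorm q A * lpnorm q u.
Proof.
move=> q0 A0 u0.
have LHS0 : (forall x, u x = 0) ->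
    lpnorm q (fun z => \esum_(x in [set: T]) (A z x * u x)) = 0.
  move=> ux0; rewrite (_ : (fun z => _) = (fun _ => 0)) ?lpnorm0 //.
  by apply: funext => z; apply: esum1 => x _; rewrite ux0 mule0.
have [N0|Nn0] := eqVneq (lpnorm q u) 0.
  by rewrite LHS0 ?mule_ge0 ?opnorm_ge0 ?lpnorm_ge0 // => x; apply: lpnorm_eq0 N0.
have [Ny|Nny] := eqVneq (lpnorm q u) +oo.
  have [Oz|Onz] := eqVneq (opnorm q A) 0; last first.
    by rewrite Ny gt0_muley ?leey // lt0e Onz opnorm_ge0.
  have A00 z x : A z x = 0.
    apply/le_anti; rewrite A0 andbT -Oz.
    pose g := fun y : T => (if y \in [set x] then 1 else 0 : R)%R.
    have g0 y : (0 <= g y)%R by rewrite /g; case: ifP.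
    have g1 : lpnorm q (fun y => (g y)%:E) <= 1.
      rewrite /lpnorm (_ : (fun y => _) = (fun y => if y \in [set x] then 1 else 0)).
        by rewrite -esum_mkcond esum_set1 // poweR1r.
      apply: funext => y; rewrite /g; case: ifP => _.
        by rewrite abse1 poweR1r.
      by rewrite abse0 poweR0r // gt_eqF.
    apply: le_trans (le_opnorm A g0 g1).
    apply: le_trans (lpnorm_ge1 z q0 _); last by move=> y; apply: kact_ge0.
    apply: le_trans (esum_ge1 (a := fun y => A z y * (g y)%:E) (i := x) _ _) => //.
      by rewrite /g ifT ?inE // mule1.
    by move=> y; rewrite mule_ge0 // lee_fin.
  rewrite (_ : (fun z => _) = (fun _ => 0)) ?lpnorm0 ?mule_ge0 ?opnorm_ge0 ?lpnorm_ge0 //.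
  by apply: funext => z; apply: esum1 => x _; rewrite A00 mul0e.
have Nfin : lpnorm q u \is a fin_num by rewrite ge0_fin_numE ?lpnorm_ge0 // ltey.
set n := fine (lpnorm q u).
have Ne : lpnorm q u = n%:E by rewrite fineK.
have n0 : (0 < n)%R by rewrite -lte_fin -Ne lt0e Nn0 lpnorm_ge0.
have ufin x : u x \is a fin_num.
  by rewrite ge0_fin_numE ?u0 // (le_lt_trans (lpnorm_ge1 x q0 u0)) // Ne ltry.
pose g x := (n^-1 * fine (u x))%R.
have g0 x : (0 <= g x)%R by rewrite /g mulr_ge0 ?fine_ge0 // invr_ge0 ltW.
have ue x : u x = n%:E * (g x)%:E.
  by rewrite -EFinM /g mulrA mulfV ?gt_eqF // mul1r fineK.
have g1 : lpnorm q (fun x => (g x)%:E) <= 1.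
  rewrite (_ : (fun x => _) = (fun x => (n^-1)%:E * u x)).
    rewrite lpnormZ //; last by rewrite lee_fin invr_ge0 ltW.
    by rewrite Ne -EFinM mulVf ?gt_eqF.
  by apply: funext => x; rewrite ue muleA -EFinM mulVf ?gt_eqF // mul1r.
rewrite (_ : (fun z => _) = (fun z => n%:E * kact A g z)); last first.
  have nn : 0 <= n%:E by rewrite lee_fin ltW.
  apply: funext => z; rewrite /kact -esumZl //; last first.
    by move=> x; rewrite mule_ge0 // lee_fin.
  by apply: eq_esum => x _; rewrite ue muleCA.
have nn : 0 <= n%:E by rewrite lee_fin ltW.
rewrite lpnormZ //; last by move=> z; apply: kact_ge0.
rewrite Ne muleC; apply: lee_pmul => //; first exact: lpnorm_ge0.
exact: le_opnorm.
Qed.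

End Op.

End Helpers3.

Section Helpers4.
Local Open Scope classical_set_scope.
Local Open Scope ring_scope.
Local Open Scope ereal_scope.


Section Chain.
Context {R : realType} {X : choiceType} (x0 : X) (G : X -> \bar R).

Fixpoint bw (b : nat -> X -> X -> \bar R) (n : nat) : X -> \bar R :=
  match n with
  | 0 => G
  | n'.+1 => fun x => \esum_(y in [set: X]) (b 1%N x y * bw (fun i => b i.+1) n' y)
  end.

Lemma bw_ge0 b n x : (forall i x y, 0 <= b i x y) -> (forall x, 0 <= G x) -> 0 <= bw b n x.
Proof.
elim: n b x => [|n IH] b x b0 G0 /=; first exact: G0.
by apply: esum_ge0 => y _; rewrite mule_ge0 // IH.
Qed.

Lemma esum_pair (A B : choiceType) (a : A -> B -> \bar R) :
  (forall x y, 0 <= a x y) ->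
  \esum_(p in [set: A * B]) a p.1 p.2 = \esum_(x in [set: A]) \esum_(y in [set: B]) a x y.
Proof.
move=> a0; rewrite esum_esum //; congr esum.
by apply/seteqP; split => // -[x y].
Qed.

Lemma chain_esum n (F : X -> \bar R) (b : nat -> X -> X -> \bar R) :
  (forall x, 0 <= F x) -> (forall i x y, 0 <= b i x y) -> (forall x, 0 <= G x) ->
  \esum_(t in [set: n.+1.-tuple X])
     (F (nth x0 t 0) * (\prod_(1 <= i < n.+1) b i (nth x0 t i.-1) (nth x0 t i)) *
      G (nth x0 t n))
  = \esum_(x in [set: X]) (F x * bw b n x).
Proof.
elim: n F b => [|n IH] F b F0 b0 G0.
  rewrite (reindex_esum [set: X] [set: 1.-tuple X] (fun x => [tuple x])); last first.
    split.
    - by move=> x _.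
    - by move=> x y _ _ /(congr1 (fun t : 1.-tuple X => thead t)).
    - move=> t _; exists (thead t) => //; apply: val_inj => /=.
      by case: t => -[|a [|]] //= _; rewrite /thead (tnth_nth x0).
  apply: eq_esum => x _ /=.
  by rewrite big_geq // mule1.
rewrite (reindex_esum [set: X * n.+1.-tuple X] [set: n.+2.-tuple X]
          (fun p => [tuple of p.1 :: p.2])); last first.
  split.
  - by move=> p _.
  - move=> [x t] [y s] _ _ /(congr1 val) /= [-> e]; congr pair; exact: val_inj.
  - move=> t _; exists (thead t, behead_tuple t) => //; apply: val_inj => /=.
    by case: t => -[|a s] //= _; rewrite /thead (tnth_nth x0).
have prod0 (c : nat -> X -> X -> \bar R) m (s : seq X) : (forall i x y, 0 <= c i x y) ->
    0 <= \prod_(1 <= i < m) c i (nth x0 s i.-1) (nth x0 s i).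
  by move=> c0; apply: prode_ge0 => i _; exact: c0.
rewrite (esum_pair (a := fun x (t : n.+1.-tuple X) => F (nth x0 [tuple of x :: t] 0) *
      (\prod_(1 <= i < n.+2) b i (nth x0 [tuple of x :: t] i.-1) (nth x0 [tuple of x :: t] i)) *
      G (nth x0 [tuple of x :: t] n.+1))); last first.
  by move=> x t; rewrite !mule_ge0 // prod0.
apply: eq_esum => x _ /=.
rewrite -(IH (b 1%N x) (fun i => b i.+1)) //.
rewrite -esumZl //; last by move=> t; rewrite !mule_ge0 //; apply: prode_ge0 => i _; exact: b0.
apply: eq_esum => t _.
have -> : \prod_(1 <= i < n.+2) b i (nth x0 (x :: t) i.-1) (nth x0 (x :: t) i) =
   b 1%N x (nth x0 t 0) * \prod_(1 <= i < n.+1) b i.+1 (nth x0 t i.-1) (nth x0 t i).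
  rewrite big_nat_recl; last by [].
  apply: (congr2 (fun a c => a * c)); first by [].
  apply: eq_big_nat => i /andP[i1 _].
  by case: i i1.
by rewrite -!muleA.
Qed.

End Chain.

End Helpers4.

Section Helpers5.
Local Open Scope classical_set_scope.
Local Open Scope ring_scope.
Local Open Scope ereal_scope.


Section VW.
Context {R : realType} {T : choiceType} (Gt : T -> \bar R).

Fixpoint vw (Qs Us : nat -> T -> T -> \bar R) (n : nat) : T -> \bar R :=
  match n with
  | 0 => Gt
  | n'.+1 => fun y => \esum_(z in [set: T]) (Qs 1%N y z *
      \esum_(z' in [set: T]) (Us 1%N z z' * vw (fun i => Qs i.+1) (fun i => Us i.+1) n' z'))
  end.

Lemma vw_ge0 n Qs Us y : (forall i x y, 0 <= Qs i x y) -> (forall i x y, 0 <= Us i x y) ->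
  (forall x, 0 <= Gt x) -> 0 <= vw Qs Us n y.
Proof.
elim: n Qs Us y => [|n IH] Qs Us y Q0 U0 G0 /=; first exact: G0.
apply: esum_ge0 => z _; rewrite mule_ge0 //; apply: esum_ge0 => z' _.
by rewrite mule_ge0 // IH.
Qed.

Lemma bw_vw n Qs Us p : (forall i x y, 0 <= Qs i x y) -> (forall i x y, 0 <= Us i x y) ->
  (forall x, 0 <= Gt x) ->
  bw (fun p : T * T => Gt p.2) (fun i p p' => Qs i p.2 p'.1 * Us i p'.1 p'.2) n p =
  vw Qs Us n p.2.
Proof.
elim: n Qs Us p => [|n IH] Qs Us p Q0 U0 G0 //=.
transitivity (\esum_(q in [set: T * T]) (Qs 1%N p.2 q.1 * Us 1%N q.1 q.2 *
                     vw (fun i => Qs i.+1) (fun i => Us i.+1) n q.2)).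
  apply: eq_esum => -[z z'] _ /=.
  by rewrite (IH (fun i => Qs i.+1) (fun i => Us i.+1) (z, z')).
transitivity (\esum_(z in [set: T]) \esum_(z' in [set: T]) (Qs 1%N p.2 z * Us 1%N z z' *
                     vw (fun i => Qs i.+1) (fun i => Us i.+1) n z')).
  rewrite -(esum_pair (a := fun (z z' : T) =>
   Qs 1%N p.2 z * Us 1%N z z' * vw (fun i => Qs i.+1) (fun i => Us i.+1) n z')) //.
  by move=> z z'; rewrite !mule_ge0 // vw_ge0.
apply: eq_esum => z _; rewrite -esumZl //; last by move=> z'; rewrite mule_ge0 // vw_ge0.
by apply: eq_esum => z' _; rewrite muleA.
Qed.

Lemma wstep (q : R) (W : T -> R) (K : T -> T -> \bar R) (V : T -> \bar R) :
  (0 < q)%R -> (forall x, (0 < W x)%R) -> (forall z x, 0 <= K z x) -> (forall x, 0 <= V x) ->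
  lpnorm q (fun z => (W z)%:E * \esum_(x in [set: T]) (K z x * V x)) <=
  opnorm q (wconj W K) * lpnorm q (fun x => (W x)%:E * V x).
Proof.
move=> q0 W0 K0 V0.
have Wge x : 0 <= (W x)%:E by rewrite lee_fin ltW.
have Wige x : 0 <= ((W x)^-1)%:E by rewrite lee_fin invr_ge0 ltW.
rewrite (_ : (fun z => _) = (fun z => \esum_(x in [set: T]) (wconj W K z x * ((W x)%:E * V x)))).
  apply: op_bound => //; last by move=> x; rewrite mule_ge0.
  by move=> z x; rewrite /wconj !mule_ge0.
apply: funext => z; rewrite -esumZl //; last by move=> x; rewrite mule_ge0.
apply: eq_esum => x _; rewrite /wconj -!muleA; congr (_ * _); congr (_ * _).
by rewrite muleA -EFinM mulVf ?gt_eqF // mul1e.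
Qed.

Lemma vw_bound (q : R) (W : T -> R) n Qs Us (mQ mU : \bar R) :
  (0 < q)%R -> (forall x, (0 < W x)%R) ->
  (forall i x y, 0 <= Qs i x y) -> (forall i x y, 0 <= Us i x y) -> (forall x, 0 <= Gt x) ->
  (forall i, (1 <= i <= n)%N -> opnorm q (wconj W (Qs i)) <= mQ) ->
  (forall i, (1 <= i <= n)%N -> opnorm q (wconj W (Us i)) <= mU) ->
  lpnorm q (fun x => (W x)%:E * vw Qs Us n x) <=
  mQ ^+ n * mU ^+ n * lpnorm q (fun x => (W x)%:E * Gt x).
Proof.
move=> q0 W0; elim: n Qs Us => [|n IH] Qs Us Q0 U0 G0 hQ hU.
  by rewrite /= ?expe0 !mul1e.
have Wge x : 0 <= (W x)%:E by rewrite lee_fin ltW.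
rewrite [vw _ _ _]/=.
apply: le_trans (wstep q0 W0 (Q0 1%N) _) _.
  by move=> x; apply: esum_ge0 => z' _; rewrite mule_ge0 // vw_ge0.
have h1 : (1 <= 1 <= n.+1)%N by [].
have onn (A : T -> T -> \bar R) : 0 <= opnorm q A := opnorm_ge0 A q0.
have V0 x : 0 <= vw (fun i => Qs i.+1) (fun i => Us i.+1) n x.
  exact: vw_ge0 (fun i => Q0 i.+1) (fun i => U0 i.+1) G0.
have ws := wstep q0 W0 (U0 1%N) V0.
have H := lee_pmul (onn _) (lpnorm_ge0 _ _) (hQ 1%N h1) ws.
apply: (le_trans H).
have sh i : (0 < i <= n)%N -> (0 < i.+1 <= n.+1)%N by move=> /andP[_ hi]; rewrite ltnS.
have IH' := IH (fun i => Qs i.+1) (fun i => Us i.+1) (fun i => Q0 i.+1) (fun i => U0 i.+1) G0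
   (fun i hi => hQ i.+1 (sh i hi)) (fun i hi => hU i.+1 (sh i hi)).
have mQ0 : 0 <= mQ by apply: le_trans (hQ 1%N h1); exact: onn.
have H2 := lee_pmul (onn _) (lpnorm_ge0 _ _) (hU 1%N h1) IH'.
have H3 := lee_pmul mQ0 (mule_ge0 (onn _) (lpnorm_ge0 _ _)) (lexx mQ) H2.
apply: (le_trans H3); rewrite le_eqVlt; apply/orP; left; apply/eqP.
rewrite !expeS !muleA; congr (_ * _ * _).
by rewrite muleAC.
Qed.


End VW.

End Helpers5.

Section Helpers6.
Local Open Scope classical_set_scope.
Local Open Scope ring_scope.
Local Open Scope ereal_scope.


Section Nonneg.
Context {R : realType}.

Lemma bigmaxe_ge0 (I : finType) (P : pred I) (F : I -> \bar R) :
  0 <= \big[maxe/0]_(i | P i) F i.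
Proof. by rewrite bigmax_idr le_max lexx orbT. Qed.

Lemma qrw_ge0 n x : (0 <= qrw R n x)%R.
Proof. by rewrite /qrw divr_ge0 // exprn_ge0. Qed.

Lemma QQ_ge0 h (I J : {set {set 'I_h}}) n z x : 0 <= QQ R I J n z x.
Proof.
rewrite /QQ; case: ifP => // _; rewrite lee_fin; apply: prodr_ge0 => a _; exact: qrw_ge0.
Qed.

Lemma Qhat_ge0 h (I J : {set {set 'I_h}}) L z x : 0 <= Qhat R I J L z x.
Proof. by apply: sume_ge0 => n _; exact: QQ_ge0. Qed.

Lemma qf_ge0 (f : Z2 -> R) n x : 0 <= qf f n x.
Proof.
by apply: esum_ge0 => z _; rewrite lee_fin mulr_ge0 // qrw_ge0.
Qed.

Lemma qJ_ge0 h (f : Z2 -> R) (J : {set {set 'I_h}}) n x : 0 <= qJ f J n x.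
Proof. rewrite /qJ; case: ifP => // _; apply: prode_ge0 => a _; exact: qf_ge0. Qed.

Lemma qhat_ge0 h (f : Z2 -> R) (J : {set {set 'I_h}}) L x : 0 <= qhat f J L x.
Proof. by apply: sume_ge0 => n _; exact: qJ_ge0. Qed.

Lemma qbar_ge0 h (g : Z2 -> R) (J : {set {set 'I_h}}) L x : 0 <= qbar g J L x.
Proof.
rewrite /qbar; elim/big_ind: _ => // [a b ha hb|n _]; [by rewrite le_max ha|exact: qJ_ge0].
Qed.

Lemma Exi_ge0 (P : probability R R) beta h (J : {set {set 'I_h}}) : 0 <= Exi P beta J.
Proof. exact: abse_ge0. Qed.

Lemma Uabs_ge0 h (c : \bar R) (J : {set {set 'I_h}}) m z x : 0 <= c -> 0 <= Uabs c J m z x.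
Proof.
move=> c0; apply: esum_ge0 => k _; rewrite mule_ge0 ?expe_ge0 //.
apply: sume_ge0 => t _; apply: esum_ge0 => y _; apply: prode_ge0 => i _; exact: QQ_ge0.
Qed.

Lemma Uhat_ge0 h (c : \bar R) lam (J : {set {set 'I_h}}) L z x : 0 <= c -> 0 <= Uhat c lam J L z x.
Proof.
move=> c0; rewrite /Uhat adde_ge0 //; first by case: ifP.
apply: sume_ge0 => m _; rewrite mule_ge0 ?Uabs_ge0 // lee_fin expR_ge0.
Qed.

End Nonneg.

Lemma adm_part h r (Is : r.-tuple {set {set 'I_h}}) i : admissible Is -> (i < r)%N ->
  is_part (Iseq Is i) && (Iseq Is i != star h).
Proof.
case/and3P => /forallP A _ _ hi; have := A (Ordinal hi).
by rewrite /Iseq (tnth_nth finset.set0).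
Qed.

Lemma adm_neq h r (Is : r.-tuple {set {set 'I_h}}) i : admissible Is -> (0 < i)%N -> (i < r)%N ->
  Iseq Is i != Iseq Is i.-1.
Proof.
case/and3P => _ /forallP B _ i0 hi; have := B (Ordinal hi).
by rewrite /= i0.
Qed.

End Helpers6.

Unset Implicit Arguments.

Theorem theorem4p10 (R : realType) (P : probability R R)
  (hP_int : P.-integrable [set: R] EFin)
  (hP_mean : (\int[P]_x x%:E = 0)%E)
  (hP_var : (\int[P]_x (x ^+ 2)%:E = 1)%E)
  (h L : nat) (beta lam : R) (f g : Z2 -> R) (W : Xh h -> R) (p q : R) (r : nat)
  (hh : (2 <= h)%N) (hbeta : 0 < beta) (hlam : 0 <= lam)
  (hP_exp : (\int[P]_x (expR (beta * x))%:E < +oo)%E)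
  (hW : forall x, 0 < W x)
  (hp : 1 < p) (hq : 1 < q) (hpq : p^-1 + q^-1 = 1)
  (hr : (1 <= r)%N) :
  (Xi P beta lam h f g L r <=
     (\big[maxe/0%E]_(I : {set {set 'I_h}} | is_part I && (I != star h))
        lpnorm p (fun x => qhat f I L x * ((W x)^-1)%:E)) *
     (\big[maxe/0%E]_(J : {set {set 'I_h}} | is_part J && (J != star h))
        lpnorm q (fun x => (W x)%:E * qbar g J L x)) *
     Xibulk P beta lam W q L r)%E.
Proof.
have p0 : 0 < p by apply: lt_trans hp.
have q0 : 0 < q by apply: lt_trans hq.
case: r hr => [//|n] _.
rewrite /Xi /Xibulk; cbv zeta.
pose mF := \big[maxe/0%E]_(I : {set {set 'I_h}} | is_part I && (I != star h))
        lpnorm p (fun x => (qhat f I L x * ((W x)^-1)%:E)%E).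
pose mG := \big[maxe/0%E]_(J : {set {set 'I_h}} | is_part J && (J != star h))
        lpnorm q (fun x => ((W x)%:E * qbar g J L x)%E).
pose mQ := \big[maxe/0%E]_(IJ : {set {set 'I_h}} * {set {set 'I_h}} |
                   [&& is_part IJ.1, IJ.1 != star h, is_part IJ.2,
                       IJ.2 != star h & IJ.1 != IJ.2])
                 opnorm q (wconj W (Qhat R IJ.1 IJ.2 L)).
pose mU := \big[maxe/0%E]_(I : {set {set 'I_h}} | is_part I && (I != star h))
                 opnorm q (wconj W (Uhat (Exi P beta I) lam I L)).
rewrite -/mF -/mG -/mQ -/mU.
have mF0 : (0 <= mF)%E by exact: bigmaxe_ge0.
have mG0 : (0 <= mG)%E by exact: bigmaxe_ge0.
have mQ0 : (0 <= mQ)%E by exact: bigmaxe_ge0.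
have mU0 : (0 <= mU)%E by exact: bigmaxe_ge0.
have pE0 (Is : n.+1.-tuple {set {set 'I_h}}) : (0 <= \prod_(i < n.+1) Exi P beta (tnth Is i))%E.
  by apply: prode_ge0 => i _; exact: Exi_ge0.
rewrite ge0_sume_distrr; last first.
  by move=> Is _; rewrite !mule_ge0 // expe_ge0.
apply: lee_sum => Is adm.
set E := (\prod_(i < n.+1) Exi P beta (tnth Is i))%E.
have -> : (mF * mG * (E * mQ ^+ n.+1.-1 * mU ^+ n.+1) = E * (mF * mG * (mQ ^+ n * mU ^+ n.+1)))%E.
  by rewrite [RHS]muleCA -[(E * _ * _)%E]muleA.
apply: lee_pmul; [exact: pE0| |exact: lexx|].
  by apply: esum_ge0 => zz _; rewrite !mule_ge0 ?qhat_ge0 ?Uhat_ge0 ?Exi_ge0 ?qbar_ge0 //; apply: prode_ge0 => i _; rewrite mule_ge0 ?Qhat_ge0 ?Uhat_ge0 ?Exi_ge0.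
pose I := Iseq Is.
pose Qs := fun i => Qhat R (I i.-1) (I i) L.
pose Us := fun i => Uhat (Exi P beta (I i)) lam (I i) L.
pose Gt := qbar g (I n) L.
pose Fp := fun pp : Xh h * Xh h => (qhat f (I 0%N) L pp.1 * Us 0%N pp.1 pp.2)%E.
pose b := fun i (pp pp' : Xh h * Xh h) => (Qs i pp.2 pp'.1 * Us i pp'.1 pp'.2)%E.
have Qs0 i x y : (0 <= Qs i x y)%E by exact: Qhat_ge0.
have Us0 i x y : (0 <= Us i x y)%E by rewrite Uhat_ge0 ?Exi_ge0.
have Gt0 x : (0 <= Gt x)%E by exact: qbar_ge0.
have Fp0 x : (0 <= Fp x)%E by rewrite mule_ge0 ?qhat_ge0.
have b0 i x y : (0 <= b i x y)%E by rewrite mule_ge0.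
rewrite (@chain_esum _ _ (Xh0 h, Xh0 h) (fun pp => Gt pp.2) n Fp b Fp0 b0 (fun x => Gt0 x.2)).
have vw0 m Q' U' x : (forall i x y, 0 <= Q' i x y)%E -> (forall i x y, 0 <= U' i x y)%E ->
    (0 <= vw Gt Q' U' m x)%E.
  by move=> hQ' hU'; apply: vw_ge0.
rewrite (@eq_esum _ _ _ _ (fun x => Fp x * vw Gt Qs Us n x.2)%E); last first.
  by move=> x _; rewrite (@bw_vw _ _ Gt n Qs Us x Qs0 Us0 Gt0).
pose w := fun z => (\esum_(z' in [set: Xh h]) (Us 0%N z z' * vw Gt Qs Us n z'))%E.
have w0 z : (0 <= w z)%E by apply: esum_ge0 => z' _; rewrite mule_ge0 ?vw0.
have -> : (\esum_(x in [set: Xh h * Xh h]) (Fp x * vw Gt Qs Us n x.2) =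
          \esum_(z in [set: Xh h]) (qhat f (I 0%N) L z * w z))%E.
  rewrite (@esum_pair _ _ _ (fun z z' => (Fp (z, z') * vw Gt Qs Us n z')%E)); last first.
    by move=> z z'; rewrite mule_ge0 ?vw0.
  apply: eq_esum => z _; rewrite /w -esumZl ?qhat_ge0 //; last first.
    by move=> z'; rewrite mule_ge0 ?vw0.
  by apply: eq_esum => z' _; rewrite /Fp /= muleA.
have Wge x : (0 <= (W x)%:E)%E by rewrite lee_fin ltW.
have Wige x : (0 <= ((W x)^-1)%:E)%E by rewrite lee_fin invr_ge0 ltW.
have -> : (\esum_(z in [set: Xh h]) (qhat f (I 0%N) L z * w z) =
          \esum_(z in [set: Xh h]) ((qhat f (I 0%N) L z * ((W z)^-1)%:E) * ((W z)%:E * w z)))%E.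
  apply: eq_esum => z _; rewrite -muleA; congr (_ * _)%E.
  by rewrite muleA -EFinM mulVf ?gt_eqF // mul1e.
apply: le_trans (hoelder_esum p0 q0 hpq _ _) _.
- by move=> x; rewrite mule_ge0 ?qhat_ge0.
- by move=> x; rewrite mule_ge0.
have hn : (n < n.+1)%N by [].
have h0 : (0 < n.+1)%N by [].
have bF : (lpnorm p (fun z => qhat f (I 0%N) L z * ((W z)^-1)%:E) <= mF)%E.
  by rewrite /mF; apply: (@le_bigmax_cond _ _ _ _ (I 0%N)); exact: adm_part adm h0.
have bG : (lpnorm q (fun z => (W z)%:E * Gt z) <= mG)%E.
  by rewrite /mG; apply: (@le_bigmax_cond _ _ _ _ (I n)); exact: adm_part adm hn.
have bU i : (i <= n)%N -> (opnorm q (wconj W (Us i)) <= mU)%E.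
  by move=> hi; rewrite /mU; apply: (@le_bigmax_cond _ _ _ _ (I i)); exact: adm_part adm (hi : (i < n.+1)%N).
have bQ i : (1 <= i <= n)%N -> (opnorm q (wconj W (Qs i)) <= mQ)%E.
  move=> /andP[i1 hi].
  have hi' : (i < n.+1)%N by [].
  have hi1 : (i.-1 < n.+1)%N by apply: leq_ltn_trans (leq_pred i) hi'.
  rewrite /mQ; apply: (@le_bigmax_cond _ _ _ _ (I i.-1, I i)).
  have /andP[a1 a2] := adm_part adm hi1; have /andP[b1 b2] := adm_part adm hi'.
  by rewrite /= /I a1 a2 b1 b2 eq_sym (adm_neq adm i1 hi').
have onn (A : Xh h -> Xh h -> \bar R) : (0 <= opnorm q A)%E := opnorm_ge0 A q0.
have H1 := wstep q0 hW (Us0 0%N) (fun x => vw0 n Qs Us x Qs0 Us0).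
have H2 := @vw_bound _ _ Gt q W n Qs Us mQ mU q0 hW Qs0 Us0 Gt0 bQ (fun i hi => bU i (andP hi).2).
have H3 : (lpnorm q (fun x => (W x)%:E * w x) <= mU * (mQ ^+ n * mU ^+ n * mG))%E.
  apply: le_trans H1 _; apply: lee_pmul.
  - exact: onn.
  - exact: lpnorm_ge0.
  - exact: bU.
  apply: le_trans H2 _; apply: lee_pmul => //.
  - by rewrite mule_ge0 // expe_ge0.
  - exact: lpnorm_ge0.
apply: le_trans (lee_pmul (lpnorm_ge0 _ _) (lpnorm_ge0 _ _) bF H3) _.
rewrite le_eqVlt; apply/orP; left; apply/eqP.
rewrite expeS [RHS]muleAC -[RHS]muleA; congr (_ * _)%E.
by rewrite [(mQ ^+ n * (mU * _))%E]muleCA -muleA.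
Qed.
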